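(* Let $k<\omega$, $\bar S=\langle S_m:m\le k\rangle$ and $\Lambda\subseteq\prod_{m\le k}{}^\omega(S_m)$. Assume there is a family $\langle\alpha_{\bar\eta,m,n}:\bar\eta\in\Lambda,m\le k,n<\omega\rangle$ of ordinals below $2^{\aleph_0}$ such that for every function $h:\Lambda_{\le k}\to 2^{\aleph_0}$ there is $\bar\eta\in\Lambda$ with $h(\bar\eta\upharpoonleft\langle m,n\rangle)=\alpha_{\bar\eta,m,n}$ for all $m\le k$, $n<\omega$. Then there is $\mathbf a:\Lambda\times\omega\to\mathbb Z$ such that, writing $G=G_{(k,\bar S,\Lambda,\mathbf a)}$, every homomorphism $h:G\to\mathbb Z$ satisfies $h(z)=0$.
   Context: For a set $X$, ${}^\omega X$ is the set of functions $\omega\to X$; $\Lambda$ consists of sequences $\bar\eta=\langle\eta_0,\dots,\eta_k\rangle$ with $\eta_m\in{}^\omega(S_m)$. For $\bar\eta\in\Lambda$, $m\le k$, $n<\omega$, $\bar\eta\upharpoonleft\langle m,n\rangle$ is the sequence obtained from $\bar\eta$ by replacing $\eta_m$ with $\eta_m\restriction n$. $\Lambda_m=\{\bar\eta\upharpoonleft\langle m,n\rangle:\bar\eta\in\Lambda,n<\omega\}$, $\Lambda_{\le k}=\bigcup_{m\le k}\Lambda_m$. Given $\mathbf a:\Lambda\times\omega\to\mathbb Z$ (write $\mathbf a_{\bar\eta,n}$), $G_{(k,\bar S,\Lambda,\mathbf a)}$ is the abelian group generated by $z$, $x_{\bar\nu}$ ($\bar\nu\in\Lambda_{\le k}$) and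 $y_{\bar\eta,n}$ ($\bar\eta\in\Lambda,n<\omega$) freely except for the relations $(n!)y_{\bar\eta,n+1}=y_{\bar\eta,n}+\mathbf a_{\bar\eta,n}z+\sum_{m\le k}x_{\bar\eta\upharpoonleft\langle m,n\rangle}$ ($\bar\eta\in\Lambda$, $n<\omega$). *)

(* Defs.v *)
From mathcomp Require Import all_boot all_order all_algebra.
Set Implicit Arguments. Unset Strict Implicit. Unset Printing Implicit Defensive.
Import GRing.Theory Num.Theory.

(* Index set {0,...,k} is 'I_k.+1.  A sequence <eta_0,...,eta_k> with
   eta_m in ^omega(S_m) is a dependent function. *)
Definition tup (k : nat) (S : 'I_k.+1 -> Type) := forall m : 'I_k.+1, nat -> S m.

(* Encoding of elements of Lambda_{<=k}: a sequence whose coordinates are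
   partial sequences nat -> option (S j); a finite sequence of length n is
   encoded by Some on indices < n and None afterwards.  This encoding is
   injective on sequences of the shape  eta |` <m,n>. *)
Definition ltup (k : nat) (S : 'I_k.+1 -> Type) := forall j : 'I_k.+1, nat -> option (S j).

Definition trunc (k : nat) (S : 'I_k.+1 -> Type) (eta : tup S) (m : 'I_k.+1) (n : nat)
  : ltup S :=
  fun j i => if (j == m) && (n <= i)%N then None else Some (eta j i).

(* The continuum 2^aleph_0, represented by a set of that cardinality. *)
Definition continuum := nat -> bool.

(* A homomorphism h : G_(k,S,Lambda,a) -> Z is exactly an assignment of
   integers to the generators z, x_nu, y_{eta,n} satisfying the defining
   relations (universal property of the presentation).  The arguments
   zv, xv, yv are the values h(z), h(x_nu), h(y_{eta,n}). *)
Definition respects_relations (k : nat) (S : 'I_k.+1 -> Type) (Lam : tup S -> Prop)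
  (a : tup S -> nat -> int) (zv : int) (xv : ltup S -> int) (yv : tup S -> nat -> int) :=
  forall eta, Lam eta -> forall n : nat,
    ((n`!)%:Z * yv eta n.+1 = yv eta n + a eta n * zv + \sum_(m < k.+1) xv (trunc eta m n))%R.

(* Main.v *)
Require Import Defs.
From mathcomp Require Import all_boot all_order all_algebra.
From Stdlib Require Import ClassicalEpsilon.
From mathcomp Require Import zify.
Set Implicit Arguments. Unset Strict Implicit.
Import GRing.Theory Num.Theory.

Lemma nosol (z : int) (d : nat -> int) : z != 0%R ->
  (forall n, ((n`!)%:Z * d n.+1 = d n + z)%R) -> False.
Proof.
move=> z0 H.
have Ha n : (n`! * `|d n.+1| <= `|d n| + `|z|)%N.
  have := H n => /(congr1 absz); rewrite abszM absz_nat => ->.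
  lia.
pose B := (`|d 2| + `|z|)%N.
have Hb i : (`|d (i + 2)| <= B)%N.
  elim: i => [|i IH] //=; first by rewrite /B add0n leq_addr.
  have := Ha (i + 2)%N; rewrite -addSn.
  have : (2 <= (i+2)`!)%N by apply: leq_trans (fact_geq _); lia.
  rewrite /B in IH *; nia.
pose N := (B + `|z| + 2)%N.
have := Ha N; have := Hb (B + `|z|)%N; have := fact_geq N.
rewrite -/N => h1 h2 h3.
have d0 : d N.+1 = 0%R.
  apply/eqP; rewrite -absz_eq0; apply/eqP. rewrite /N in h1 h2 h3 *; nia.
have := H N.+1; rewrite d0 add0r => /(congr1 absz); rewrite abszM absz_nat => hz.
have h4 := fact_geq N.+1.
have z1 : (0 < `|z|)%N by rewrite absz_gt0.
have h5 : (0 < `|d N.+2|)%N by move: z1; rewrite -hz; nia.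
move: h4 h5 z1 hz; rewrite /N; set f := (B + `|z| + 2).+1`!; set u := `|d _|; nia.
Qed.

Definition enc (x : int) : continuum := fun i => i == pickle x.
Lemma enc_inj : injective enc.
Proof.
move=> x y /(congr1 (fun f => f (pickle y))); rewrite /enc eqxx => /eqP.
by move=> E; apply: (pcan_inj (@pickleK int)); rewrite E.
Qed.

Theorem claim2p3 (k : nat) (S : 'I_k.+1 -> Type) (Lam : tup S -> Prop)
  (alpha : tup S -> 'I_k.+1 -> nat -> continuum) :
  (forall h : ltup S -> continuum,
     exists eta, Lam eta /\ forall (m : 'I_k.+1) (n : nat), h (trunc eta m n) = alpha eta m n) ->
  exists a : tup S -> nat -> int,
    forall (zv : int) (xv : ltup S -> int) (yv : tup S -> nat -> int),
      respects_relations Lam a zv xv yv -> zv = 0%R.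
Proof.
move=> Hg.
pose P eta := exists (y : nat -> int) (x : 'I_k.+1 -> nat -> int),
  (forall m n, enc (x m n) = alpha eta m n) /\
  forall n, ((n`!)%:Z * y n.+1 = y n + \sum_(m < k.+1) x m n)%R.
exists (fun eta n => if excluded_middle_informative (P eta) then 1%R else 0%R).
move=> zv xv yv Hr.
apply/eqP; apply/negPn/negP => z0.
have [eta [HL Heq]] := Hg (fun nu => enc (xv nu)).
have Hr' := Hr eta HL.
case: (excluded_middle_informative (P eta)) Hr' => [[y [x [Hx Hy]]]|nP] Hr'.
  have Ex m n : x m n = xv (trunc eta m n).
    by apply: enc_inj; rewrite Hx Heq.
  apply: (nosol (d := fun n => yv eta n - y n)%R z0) => n.
  rewrite mulrBr Hr' Hy (eq_bigr _ (fun m _ => Ex m n)).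
  rewrite mul1r. set s := (\sum_(_ < _) _)%R. set u := yv eta n. set w := y n. lia.
apply nP; exists (yv eta), (fun m n => xv (trunc eta m n)); split.
  by move=> m n; rewrite -Heq.
by move=> n; rewrite Hr' mul0r addr0.
Qed.
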